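(* Let $\mathbb S=\{(X_1,X_2,A)\in\mathbb C^2\times\mathbb R: -2\,\mathrm{Re}(X_1+X_2)-2\,\mathrm{Re}(X_1\overline{X}_2e^{-2iA})+|X_1|^2+|X_2|^2+1=0\}$ and $\mathbb S_{123}=\{(X_1,X_2,A)\in\mathbb C^2\times\mathbb R:\mathrm{Re}(e^{iA})=0\}$. Writing $X_1=a+bi$, $X_2=c+di$, the intersection $\mathbb S\cap\mathbb S_{123}$ is not transversal; it is a union of $2$-dimensional real analytic varieties, given by the equations $a+c=1$, $b+d=0$, $A=\pm\pi/2+2k\pi$ ($k\in\mathbb Z$). *)

(* Defs.v *)
From Stdlib Require Import Reals ZArith.
From Coquelicot Require Import Coquelicot.
Open Scope R_scope.

Definition expi (t : R) : C := (cos t, sin t).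

Definition FS (X1 X2 : C) (A : R) : R :=
  -2 * Re (Cplus X1 X2)
  - 2 * Re (Cmult (Cmult X1 (Cconj X2)) (expi (-2 * A)))
  + Cmod X1 ^ 2 + Cmod X2 ^ 2 + 1.

Definition G123 (X1 X2 : C) (A : R) : R := Re (expi A).

Definition in_S (X1 X2 : C) (A : R) : Prop := FS X1 X2 A = 0.
Definition in_S123 (X1 X2 : C) (A : R) : Prop := G123 X1 X2 A = 0.

Definition grad (f : C -> C -> R -> R) (X1 X2 : C) (A : R) : R * R * R * R * R :=
  let a := Re X1 in let b := Im X1 in let c := Re X2 in let d := Im X2 in
  (Derive (fun t => f (t, b) (c, d) A) a,
   Derive (fun t => f (a, t) (c, d) A) b,
   Derive (fun t => f (a, b) (t, d) A) c,
   Derive (fun t => f (a, b) (c, t) A) d,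
   Derive (fun t => f (a, b) (c, d) t) A).

(* The hypersurfaces S = {FS = 0} and S_123 = {G123 = 0} of C^2 x R = R^5
   intersect transversally at p iff their normal vectors (gradients of the
   defining functions) are linearly independent at p. *)
Definition transversal_at (X1 X2 : C) (A : R) : Prop :=
  let '(f1, f2, f3, f4, f5) := grad FS X1 X2 A in
  let '(g1, g2, g3, g4, g5) := grad G123 X1 X2 A in
  forall l m : R,
    l * f1 + m * g1 = 0 -> l * f2 + m * g2 = 0 -> l * f3 + m * g3 = 0 ->
    l * f4 + m * g4 = 0 -> l * f5 + m * g5 = 0 -> l = 0 /\ m = 0.

(* Main.v *)
Require Import Defs.
From Stdlib Require Import Reals ZArith Lra Psatz.
From Coquelicot Require Import Coquelicot.
Open Scope R_scope.

Lemma FS_eq a b c d A : FS (a,b) (c,d) A =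
  -2*(a+c) - 2*((a*c + b*d)*cos(-2*A) - (b*c - a*d)*sin(-2*A))
  + (a^2+b^2)+(c^2+d^2)+1.
Proof.
  unfold FS, expi, Cmod; simpl fst; simpl snd.
  rewrite !pow2_sqrt by nra.
  simpl. ring.
Qed.

Lemma trig_red A : cos A = 0 -> cos (-2*A) = -1 /\ sin (-2*A) = 0.
Proof.
  intros H. replace (-2*A) with (-(2*A)) by ring.
  rewrite cos_neg, sin_neg, cos_2a_cos, sin_2a, H. split; ring.
Qed.

Lemma FS_on a b c d A : cos A = 0 ->
  FS (a,b) (c,d) A = (a+c-1)^2 + (b+d)^2.
Proof.
  intros H. destruct (trig_red A H) as [H1 H2].
  rewrite FS_eq, H1, H2. ring.
Qed.

Lemma cosPI2 : cos (PI/2) = 0.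
Proof. apply cos_eq_0_1. exists 0%Z. simpl. ring. Qed.

Theorem proposition3p6 :
  (* the intersection is not transversal *)
  ~ (forall (X1 X2 : C) (A : R),
       in_S X1 X2 A -> in_S123 X1 X2 A -> transversal_at X1 X2 A)
  /\
  (* description of S ∩ S_123, with X1 = a + b i, X2 = c + d i *)
  (forall (X1 X2 : C) (A : R),
     (in_S X1 X2 A /\ in_S123 X1 X2 A) <->
     (Re X1 + Re X2 = 1 /\ Im X1 + Im X2 = 0 /\
      exists k : Z, A = PI / 2 + 2 * IZR k * PI \/ A = - (PI / 2) + 2 * IZR k * PI)).
Proof.
  split.
  - intros Hall.
    assert (HS : in_S (1,0) (0,0) (PI/2)).
    { unfold in_S. rewrite FS_on by exact cosPI2. ring. }
    assert (HG : in_S123 (1,0) (0,0) (PI/2)).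
    { unfold in_S123, G123, expi. simpl. exact cosPI2. }
    specialize (Hall _ _ _ HS HG).
    destruct (trig_red _ cosPI2) as [H1 H2].
    unfold transversal_at, grad in Hall. simpl Re in Hall; simpl Im in Hall.
    unfold G123, expi in Hall. simpl fst in Hall.
    rewrite !Derive_const in Hall.
    set (f5 := Derive (fun t => FS (1, 0) (0, 0) t) (PI / 2)) in Hall.
    assert (Hg5 : Derive cos (PI/2) = -1).
    { apply is_derive_unique. auto_derive; auto. rewrite sin_PI2. ring. }
    rewrite (Derive_ext (fun t => Re (cos t, sin t)) cos) in Hall by reflexivity.
    rewrite Hg5 in Hall.
    assert (E1 : Derive (fun t => FS (t, 0) (0, 0) (PI / 2)) 1 = 0).
    { rewrite (Derive_ext _ (fun t => -2*(t+0) - 2*((t*0 + 0*0)*cos(-2*(PI/2)) - (0*0 - t*0)*sin(-2*(PI/2))) + (t^2+0^2)+(0^2+0^2)+1)) by (intro; apply FS_eq).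
      apply is_derive_unique. auto_derive; auto. ring. }
    assert (E2 : Derive (fun t => FS (1, t) (0, 0) (PI / 2)) 0 = 0).
    { rewrite (Derive_ext _ (fun t => -2*(1+0) - 2*((1*0 + t*0)*cos(-2*(PI/2)) - (t*0 - 1*0)*sin(-2*(PI/2))) + (1^2+t^2)+(0^2+0^2)+1)) by (intro; apply FS_eq).
      apply is_derive_unique. auto_derive; auto. ring. }
    assert (E3 : Derive (fun t => FS (1, 0) (t, 0) (PI / 2)) 0 = 0).
    { rewrite (Derive_ext _ (fun t => -2*(1+t) - 2*((1*t + 0*0)*cos(-2*(PI/2)) - (0*t - 1*0)*sin(-2*(PI/2))) + (1^2+0^2)+(t^2+0^2)+1)) by (intro; apply FS_eq).
      apply is_derive_unique. auto_derive; auto. rewrite H1, H2. ring. }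
    assert (E4 : Derive (fun t => FS (1, 0) (0, t) (PI / 2)) 0 = 0).
    { rewrite (Derive_ext _ (fun t => -2*(1+0) - 2*((1*0 + 0*t)*cos(-2*(PI/2)) - (0*0 - 1*t)*sin(-2*(PI/2))) + (1^2+0^2)+(0^2+t^2)+1)) by (intro; apply FS_eq).
      apply is_derive_unique. auto_derive; auto. rewrite H1, H2. ring. }
    rewrite E1, E2, E3, E4 in Hall.
    destruct (Hall 1 f5) as [Hl _]; [ring|ring|ring|ring|ring|lra].
  - intros [a b] [c d] A. simpl Re; simpl Im. unfold in_S, in_S123, G123, expi. simpl Re.
    split.
    + intros [HS HG]. rewrite FS_on in HS by exact HG.
      pose proof (pow2_ge_0 (a+c-1)). pose proof (pow2_ge_0 (b+d)).
      assert (Hx1 : (a+c-1)^2 = 0) by lra. assert (Hx2 : (b+d)^2 = 0) by lra.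
      assert (Hy1 : a+c-1 = 0) by nra. assert (Hy2 : b+d = 0) by nra.
      split; [lra|split; [lra|]].
      destruct (cos_eq_0_0 A HG) as [k Hk].
      destruct (Z.Even_or_Odd k) as [[m Hm]|[m Hm]]; subst k.
      * exists m. left. rewrite Hk, mult_IZR. lra.
      * exists (m+1)%Z. right. rewrite Hk, plus_IZR, plus_IZR, mult_IZR. lra.
    + intros [Hac [Hbd [k [Hk|Hk]]]].
      * assert (HG : cos A = 0).
        { apply cos_eq_0_1. exists (2*k)%Z. rewrite Hk, mult_IZR. lra. }
        rewrite FS_on by exact HG. split; [|exact HG].
        replace (a+c-1) with 0 by lra. rewrite Hbd. ring.
      * assert (HG : cos A = 0).
        { apply cos_eq_0_1. exists (2*k-1)%Z. rewrite Hk, minus_IZR, mult_IZR. lra. }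
        rewrite FS_on by exact HG. split; [|exact HG].
        replace (a+c-1) with 0 by lra. rewrite Hbd. ring.
Qed.
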